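(* Let $n\ge 1$ and $A$ be as in the context. A position $P$ of $\mathrm{AGG}(n,A)$ is reachable if and only if the sequence $v_1\le v_2\le\dots\le v_n$ of its cell values, sorted in nondecreasing order with each empty cell counted as value $0$ (so $v_i=0$ exactly when $P$ has at least $i$ empty cells), satisfies $v_i\le \mathrm{Single}(i,A)$ for every $i=1,\dots,n$.
   Context: Let $A$ be a set of positive integers with $1\in A$ (the allowed tile values). For an integer $n\ge 0$, the abstract generalized 2048 game $\mathrm{AGG}(n,A)$ is played on $n$ indistinguishable cells. A position assigns to each cell either nothing (the cell is empty) or a tile carrying a value in $A$. The initial position has all cells empty. A step, which can be performed from any position having at least one empty cell, consists of: (i) placing a new tile of value $1$ into a chosen empty cell; then (ii) optionally choosing any collection of pairwise disjoint sets of nonempty cells such that the sum of the tile values in each chosen set belongs to $A$, and merging each chosen set into a single tile, whose value is that sum, placed in one cell of the set, the other cells of the set becoming empty. The game ends when, after a step, all cells are nonempty (no further step is then possible). A position is reachable if it can be obtained from the initial position by a finite sequence of steps. For $n\ge1$, $\mathrm{Single}(n,A)$ denotes the supremum (possibly $\infty$) of the values $x\in A$ such that the position of $\mathrm{AGG}(n,A)$ with one tile of value $x$ and $n-1$ empty cells is reachable. *)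

(* Defs.v *)
From mathcomp Require Import all_boot.
Set Implicit Arguments. Unset Strict Implicit. Unset Printing Implicit Defensive.

(* A position of AGG(n,A): a function from the n cells ('I_n) to nat;
   value 0 = empty cell, value v > 0 = tile of value v. *)

(* The merge is encoded by g : cells -> cells sending each cell to the cell
   where its tile ends up; the merged sets are the fibres of fixed points of g
   (of size >= 2), consisting of nonempty cells only. *)
Definition step (n : nat) (A : nat -> Prop) (p q : 'I_n -> nat) : Prop :=
  exists c : 'I_n, p c = 0 /\
  let p' := fun i : 'I_n => if i == c then 1 else p i in
  exists g : 'I_n -> 'I_n,
    (forall i, g (g i) = g i) /\
    (forall i, p' i = 0 -> g i = i) /\
    (forall i, 0 < p' i -> 0 < p' (g i)) /\
    (forall j, g j = j -> 1 < #|[pred i | g i == j]| ->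
               A (\sum_(i | g i == j) p' i)) /\
    (forall j, q j = if g j == j then \sum_(i | g i == j) p' i else 0).

Inductive reachable (n : nat) (A : nat -> Prop) : ('I_n -> nat) -> Prop :=
| reach_init (p : 'I_n -> nat) : (forall i, p i = 0) -> reachable A p
| reach_step (p q : 'I_n -> nat) : reachable A p -> step A p q -> reachable A q.

(* x belongs to the set whose supremum is Single(n,A). *)
Definition single_val (n : nat) (A : nat -> Prop) (x : nat) : Prop :=
  A x /\ exists p : 'I_n -> nat, reachable A p /\
    exists c : 'I_n, p c = x /\ forall j, j != c -> p j = 0.

(* v <= Single(n,A) (supremum in nat ∪ {∞}): v is below every upper bound. *)
Definition le_Single (v n : nat) (A : nat -> Prop) : Prop :=
  forall b, (forall x, single_val n A x -> x <= b) -> v <= b.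

Definition sorted_values (n : nat) (p : 'I_n -> nat) : seq nat :=
  sort leq [seq p i | i <- enum 'I_n].

(* Main.v *)
Require Import Defs.
From mathcomp Require Import all_boot zify.
From Stdlib Require Import Classical.
Set Implicit Arguments. Unset Strict Implicit. Unset Printing Implicit Defensive.



Lemma reach_ext (A : nat -> Prop) n (p q : 'I_n -> nat) : reachable A p -> (forall i, p i = q i) -> reachable A q.
Proof.
case=> [p0 H0|p0 q0 Hr [c [Hc [g [G1 [G2 [G3 [G4 G5]]]]]]]] E.
- by apply: reach_init => i; rewrite -E.
- apply: (reach_step Hr); exists c; split=> //; exists g; do 4 (split=> //).
  by move=> j; rewrite -E G5.
Qed.

Definition place n (p : 'I_n -> nat) (c : 'I_n) := fun i : 'I_n => if i == c then 1 else p i.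

Lemma sum_place n (p : 'I_n -> nat) c : p c = 0 -> \sum_i place p c i = (\sum_i p i).+1.
Proof.
move=> Hc; rewrite (bigD1 c) // [in RHS](bigD1 c) //= /place eqxx Hc add1n; congr _.+1.
by apply: eq_bigr => i /negbTE ->.
Qed.

Lemma step_sum (A : nat -> Prop) n (p q : 'I_n -> nat) : step A p q -> \sum_i q i = (\sum_i p i).+1.
Proof.
move=> [c [Hc [g [G1 [G2 [G3 [G4 G5]]]]]]].
rewrite -(sum_place Hc).
rewrite [RHS](partition_big g (fun j => g j == j)) /=; last by move=> i _; rewrite G1.
rewrite [LHS](bigID (fun j => g j == j)) /= [X in _ + X]big1 ?addn0.
  by apply: eq_bigr => j Hj; rewrite G5 Hj.
by move=> j Hj; rewrite G5 (negbTE Hj).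
Qed.

Lemma reach_H (A : nat -> Prop) n (X : 'I_n -> nat) : reachable A X -> forall t, t < \sum_i X i ->
  exists p : 'I_n -> nat, reachable A p /\ (exists c, p c = 0) /\ \sum_i p i = t.
Proof.
elim=> [p Hp|p q Hr IH Hs] t.
- by rewrite big1.
- rewrite (step_sum Hs) ltnS leq_eqVlt => /orP [/eqP ->|/IH //].
  exists p; split=> //; split=> //; by case: Hs => c [Hc _]; exists c.
Qed.

Definition single n (c : 'I_n) x := fun j : 'I_n => if j == c then x else 0.

Lemma merge_all (A : nat -> Prop) n (p : 'I_n -> nat) c : reachable A p -> p c = 0 -> A (\sum_i p i).+1 ->
  reachable A (single c (\sum_i p i).+1).
Proof.
move=> Hr Hc HA; apply: (reach_step Hr); exists c; split=> //.
set p' := fun i => _.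
have p'E : p' = place p c by [].
pose g i := if p' i == 0 then i else c.
have gc : g c = c by rewrite /g /p' eqxx.
have fib : forall j i, j != c -> g i == j -> p' i = 0.
  move=> j i Hj; rewrite /g; case: (p' i =P 0) => [H _ //|_ HE]; by rewrite (eqP HE) eqxx in Hj.
have fibc : \sum_(i | g i == c) p' i = (\sum_i p i).+1.
  rewrite -(sum_place Hc) -p'E [in RHS](bigID (fun i => g i == c)) /= [X in _ + X]big1 ?addn0 //.
  move=> i; rewrite /g; case: (p' i =P 0) => [H _ //|_]; by rewrite eqxx.
have Hg: forall i, g i = i \/ g i = c by move=> i; rewrite /g; case: ifP => _; [left|right].
exists g; split; first by move=> i; case: (Hg i) => E; rewrite !E ?gc.
split; first by move=> i H; rewrite /g H.
split; first by move=> i; rewrite /g; case: eqP => [->//|_ _]; rewrite /p' eqxx.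
split.
  move=> j _ Hcard; case: (eqVneq j c) => [->|Hj]; first by rewrite fibc.
  exfalso; move: Hcard; apply/negP; rewrite -leqNgt; apply/card_le1_eqP => x y.
  rewrite !inE => Hx Hy.
  have : g x = x by rewrite /g (fib j x Hj Hx) eqxx.
  have : g y = y by rewrite /g (fib j y Hj Hy) eqxx.
  by move: Hx Hy => /eqP -> /eqP -> -> ->.
move=> j; rewrite /single; case: (eqVneq j c) => [->|Hj]; first by rewrite gc eqxx fibc.
case: eqP => // _; by rewrite big1 // => i; apply: fib.
Qed.

Lemma core (A : nat -> Prop) n (X : 'I_n -> nat) x : reachable A X -> A x -> 0 < x -> x <= \sum_i X i ->
  single_val n A x.
Proof.
move=> Hr HA x0 Hx; have Ht : x.-1 < \sum_i X i by rewrite prednK.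
have [p [Hp [[c Hc] Hs]]] := reach_H Hr Ht.
split=> //; exists (single c x); split; last by exists c; rewrite /single eqxx; split=> // j /negbTE ->.
have := merge_all Hp Hc; rewrite Hs prednK //; by apply.
Qed.

Lemma reach_A (A : nat -> Prop) n (p : 'I_n -> nat) : A 1 -> reachable A p -> forall d, p d != 0 -> A (p d).
Proof.
move=> h1; elim=> [p0 H0|p0 q Hr IH [c [Hc [g [G1 [G2 [G3 [G4 G5]]]]]]]] d.
- by rewrite H0.
rewrite G5; case: (g d =P d) => [Hg Hs|_]; last by rewrite eqxx.
have [Hle|Hgt] := leqP #|[pred i | g i == d]| 1; last by apply: G4.
have E : forall i, g i == d -> i = d.
  move=> i Hi; move/card_le1_eqP: Hle => H; apply: H; by rewrite inE ?Hi ?Hg.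
rewrite (big_pred1 d) in Hs *; last by move=> i; apply/idP/eqP => [/E //|->]; rewrite Hg.
move: Hs; case: (d =P c) => _ Hs; [exact: h1 | exact: IH].
Qed.




Definition ext n m (b : 'I_n -> nat) (f : 'I_m -> 'I_n) (u : 'I_m -> nat) : 'I_n -> nat :=
  fun d => if [pick i | f i == d] is Some i then u i else b d.


Lemma ext_in n m (f : 'I_m -> 'I_n) (finj : injective f) (b : 'I_n -> nat) u i : ext b f u (f i) = u i.
Proof.
rewrite /ext; case: pickP => [i' /eqP /finj -> //| H].
by have := H i; rewrite eqxx.
Qed.

Lemma ext_out n m (f : 'I_m -> 'I_n) (b : 'I_n -> nat) u d : (forall i, f i != d) -> ext b f u d = b d.
Proof.
move=> H; rewrite /ext; case: pickP => [i /eqP E|//].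
by have := H i; rewrite E eqxx.
Qed.

Lemma ext_cases n m (f : 'I_m -> 'I_n) d : (exists i, d = f i) \/ (forall i, f i != d).
Proof.
case: (pickP (fun i => f i == d)) => [i /eqP E|H]; first by left; exists i.
by right => i; rewrite H.
Qed.


Lemma embed_reach (A : nat -> Prop) n m (f : 'I_m -> 'I_n) (finj : injective f) (b : 'I_n -> nat) (u : 'I_m -> nat) :
  reachable A b -> (forall i, b (f i) = 0) -> reachable A u -> reachable A (ext b f u).
Proof.
move=> Hb Hb0; elim=> [u0 H0|u0 u1 Hr IH [c [Hc [g [G1 [G2 [G3 [G4 G5]]]]]]]].
  apply: (reach_ext Hb) => d; case: (ext_cases f d) => [[i ->]|H].
    by rewrite (ext_in finj) H0 Hb0.
  by rewrite ext_out.
apply: (reach_step IH); exists (f c); split; first by rewrite (ext_in finj).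
set P' := fun d => _.
set pu := fun i => if i == c then 1 else u0 i.
have P'in : forall i, P' (f i) = pu i by move=> i; rewrite /P' /pu (inj_eq finj) (ext_in finj).
have P'out : forall d, (forall i, f i != d) -> P' d = b d.
  move=> d H; rewrite /P' ext_out //; case: eqP => // E; by have := H c; rewrite E eqxx.
pose g' d := if [pick i | f i == d] is Some i then f (g i) else d.
have g'in : forall i, g' (f i) = f (g i).
  move=> i; rewrite /g'; case: pickP => [i' /eqP /finj -> //| H].
  by have := H i; rewrite eqxx.
have g'out : forall d, (forall i, f i != d) -> g' d = d.
  move=> d H; rewrite /g'; case: pickP => [i /eqP E|//]; by have := H i; rewrite E eqxx.
have fibin : forall i d, (g' d == f i) = (d \in f @: [set i' | g i' == i]).
  move=> i d; case: (ext_cases f d) => [[i' ->]|H].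
    by rewrite g'in (inj_eq finj) (mem_imset _ _ finj) inE.
  rewrite g'out //; apply/eqP/imsetP => [E|[i' _ E]].
    by have := H i; rewrite E eqxx.
  by have := H i'; rewrite E eqxx.
have fibout : forall j d, (forall i, f i != j) -> (g' d == j) = (d == j).
  move=> j d H; case: (ext_cases f d) => [[i' ->]|H'].
    rewrite g'in; apply/eqP/eqP => E; first by have := H (g i'); rewrite E eqxx.
    by have := H i'; rewrite E eqxx.
  by rewrite g'out.
have sumin : forall i, \sum_(d | g' d == f i) P' d = \sum_(i' | g i' == i) pu i'.
  move=> i; rewrite (eq_bigl (fun d => d \in f @: [set i' | g i' == i])); last by move=> d; rewrite fibin.
  rewrite big_imset /=; last by move=> x y _ _; apply: finj.
  by apply: eq_big => [x|x _]; rewrite ?inE ?P'in.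
have sumout : forall j, (forall i, f i != j) -> \sum_(d | g' d == j) P' d = b j.
  move=> j H; rewrite (big_pred1 j); first by rewrite P'out.
  by move=> d; rewrite /= fibout.
exists g'; split.
  move=> d; case: (ext_cases f d) => [[i ->]|H]; first by rewrite !g'in G1.
  by rewrite !g'out.
split.
  move=> d; case: (ext_cases f d) => [[i ->]|H]; last by rewrite g'out.
  by rewrite P'in g'in => /G2 ->.
split.
  move=> d; case: (ext_cases f d) => [[i ->]|H]; last by rewrite g'out.
  by rewrite P'in g'in P'in => /G3.
split.
  move=> j; case: (ext_cases f j) => [[i ->]|H].
    rewrite g'in => /finj Hg Hcard; have := G4 i Hg.
    rewrite -(sumin i); apply.
    have -> : #|[pred i' | g i' == i]| = #|f @: [set i' | g i' == i]|.
      by rewrite card_imset // cardsE.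
    by move: Hcard; congr (_ < _); apply: eq_card => d; rewrite inE /= fibin.
  move=> _ Hcard; exfalso; move: Hcard; apply/negP; rewrite -leqNgt.
  apply/card_le1_eqP => x y; rewrite !inE /= !fibout // => /eqP -> /eqP ->.
  done.
move=> j; case: (ext_cases f j) => [[i ->]|H].
  rewrite (ext_in finj) G5 g'in (inj_eq finj) sumin; done.
by rewrite ext_out // fibout // eqxx sumout.
Qed.



Lemma single_sum n (c : 'I_n) x : \sum_i single c x i = x.
Proof.
rewrite (bigD1 c) //= /single eqxx big1 ?addn0 // => i /negbTE ->; done.
Qed.

Lemma sg_reach (A : nat -> Prop) m x : single_val m A x -> exists c : 'I_m, reachable A (single c x).
Proof.
move=> [_ [p [Hp [c [Hc H]]]]]; exists c; apply: (reach_ext Hp) => j.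
rewrite /single; case: eqP => [->//|/eqP]; exact: H.
Qed.

Lemma reach_sg (A : nat -> Prop) m x (c : 'I_m) : A x -> reachable A (single c x) -> single_val m A x.
Proof.
move=> HA Hr; split=> //; exists (single c x); split=> //; exists c.
by rewrite /single eqxx; split=> // j /negbTE ->.
Qed.

Lemma sg_one (A : nat -> Prop) m : A 1 -> 0 < m -> single_val m A 1.
Proof.
move=> h1 Hm; pose c : 'I_m := Ordinal Hm.
have Hr : reachable A (fun _ : 'I_m => 0) by apply: reach_init.
have := merge_all Hr (c := c) erefl; rewrite big1 // => H.
exact: (reach_sg h1 (H h1)).
Qed.

Lemma sg_down (A : nat -> Prop) m x y : single_val m A y -> A x -> 0 < x -> x <= y ->
  single_val m A x.
Proof.
move=> Hy HA x0 Hxy; have [c Hr] := sg_reach Hy.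
by apply: (core Hr HA x0); rewrite single_sum.
Qed.

Definition swap m (a b : 'I_m) := fun i : 'I_m => if i == a then b else if i == b then a else i.

Lemma swapK m (a b : 'I_m) : cancel (swap a b) (swap a b).
Proof.
move=> x; rewrite /swap; case: (x =P a) => [->|Hxa].
  by case: (b =P a) => [->|_] //; rewrite eqxx.
case: (x =P b) => [->|Hxb]; first by rewrite eqxx.
by rewrite (introF eqP Hxa) (introF eqP Hxb).
Qed.

Lemma swap_inj m (a b : 'I_m) : injective (swap a b).
Proof. exact: can_inj (swapK a b). Qed.

Lemma sg_reloc (A : nat -> Prop) m x : single_val m A x -> forall c0 : 'I_m, reachable A (single c0 x).
Proof.
move=> Hs c0; have [c Hr] := sg_reach Hs.
have Hb : reachable A (fun _ : 'I_m => 0) by apply: reach_init.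
have := embed_reach (@swap_inj _ c c0) Hb (fun _ => erefl) Hr => H.
apply: (reach_ext H) => d.
have Hs0 : swap c c0 c0 = c by rewrite /swap; case: (c0 =P c) => [->//|_]; rewrite eqxx.
have E : (swap c c0 d == c) = (d == c0) by rewrite -{2}Hs0 (inj_eq (@swap_inj _ c c0)).
by rewrite -{1}(swapK c c0 d) (ext_in (@swap_inj _ c c0)) /single E.
Qed.

Lemma sg_mono (A : nat -> Prop) m m' x : single_val m A x -> m <= m' -> single_val m' A x.
Proof.
move=> Hs Hm; have [c Hr] := sg_reach Hs.
have Hb : reachable A (fun _ : 'I_m' => 0) by apply: reach_init.
have finj : injective (widen_ord Hm) by move=> a b /(congr1 val) /= /val_inj.
have := embed_reach finj Hb (fun _ => erefl) Hr => H.
apply: (reach_sg (c := widen_ord Hm c) (proj1 Hs)); apply: (reach_ext H) => d.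
case: (ext_cases (widen_ord Hm) d) => [[i ->]|Hd].
  by rewrite (ext_in finj) /single (inj_eq finj).
rewrite ext_out // /single; case: eqP => // E.
by have := Hd c; rewrite E eqxx.
Qed.

Lemma sg_le (A : nat -> Prop) m x : single_val m A x -> le_Single x m A.
Proof. by move=> H b Hb; apply: Hb. Qed.

Lemma le_sg (A : nat -> Prop) m x : le_Single x m A -> A x -> 0 < x -> single_val m A x.
Proof.
move=> Hle HA x0.
case: (classic (exists y, single_val m A y /\ x <= y)) => [[y [Hy Hxy]]|H].
  exact: sg_down Hy HA x0 Hxy.
exfalso; suff Hc : x <= x.-1 by move: Hc; rewrite leqNgt ltn_predL x0.
apply: Hle => y Hy.
rewrite -ltnS prednK //; rewrite ltnNge; apply/negP => Hxy; apply: H; by exists y.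
Qed.

Lemma le_down (A : nat -> Prop) m x y : le_Single y m A -> x <= y -> le_Single x m A.
Proof. by move=> H Hxy b Hb; apply: leq_trans Hxy (H b Hb). Qed.

Lemma le_zero (A : nat -> Prop) m : le_Single 0 m A.
Proof. by []. Qed.


Lemma count_enum_card (T: finType) (P : pred T) : count P (enum T) = #|P|.
Proof. rewrite cardE -size_filter /enum_mem -filter_predI; congr size; apply: eq_filter => x /=. by rewrite andbT. Qed.

Definition Good (A : nat -> Prop) n (p : 'I_n -> nat) :=
  forall d, p d != 0 -> single_val (#|[pred e | p e < p d]|).+1 A (p d).

Lemma good_reach (A : nat -> Prop) n N : forall (p : 'I_n -> nat), #|[pred d | p d != 0]| = N ->
  Good A p -> (forall d, p d != 0 -> A (p d)) -> reachable A p.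
Proof.
elim: N => [|N IH] p HN Hg HA.
  apply: reach_init => i; have := card0_eq HN i; rewrite !inE /=.
  by case: eqP.
have : 0 < #|[pred d | p d != 0]| by rewrite HN.
case/card_gt0P => d0; rewrite inE => Hd0.
case: (@arg_minnP _ d0 (fun d => p d != 0) p Hd0) => c Hc Hmin.
set y := p c.
have y0 : 0 < y by rewrite lt0n.
pose p0 := fun d => if d == c then 0 else p d.
have p0c : p0 c = 0 by rewrite /p0 eqxx.
have p0d : forall d, d != c -> p0 d = p d by move=> d /negbTE; rewrite /p0 => ->.
have HN0 : #|[pred d | p0 d != 0]| = N.
  move: HN; rewrite (cardD1 c) inE Hc add1n => -[<-].
  apply: eq_card => d; rewrite !inE /=; case: (d =P c) => [->|/eqP Hdc]; first by rewrite p0c.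
  by rewrite p0d.
have Hg0 : Good A p0.
  move=> d; case: (d =P c) => [->|/eqP Hdc]; first by rewrite p0c.
  rewrite p0d // => Hd; apply: sg_mono (Hg d Hd) _; rewrite ltnS; apply: subset_leq_card.
  apply/subsetP => e; rewrite !inE /=; case: (e =P c) => [->|/eqP Hec]; first by rewrite p0c lt0n.
  by rewrite p0d.
have HA0 : forall d, p0 d != 0 -> A (p0 d).
  move=> d; case: (d =P c) => [->|/eqP Hdc]; first by rewrite p0c.
  by rewrite p0d //; apply: HA.
have Hr0 := IH p0 HN0 Hg0 HA0.
have Sy := Hg c Hc; rewrite -/y in Sy.
set k := (#|[pred e | p e < y]|).+1 in Sy.
pose L := c :: [seq d <- enum 'I_n | (d != c) && (p0 d == 0)].
have HL : size L = k.
  rewrite /= size_filter count_enum_card /k; congr _.+1; apply: eq_card => d; rewrite !inE /=.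
  rewrite unfold_in /=.
  case: (d =P c) => [->|/eqP Hdc] /=; first by rewrite ltnn.
  rewrite p0d //; case: (p d =P 0) => [->|/eqP Hd]; first by rewrite y0.
  by rewrite ltnNge Hmin.
have uL : uniq L.
  rewrite /= filter_uniq ?enum_uniq // andbT mem_filter eqxx //.
have L0 : forall x, x \in L -> p0 x == 0.
  move=> x; rewrite inE => /orP [/eqP ->|]; first by rewrite p0c.
  by rewrite mem_filter => /andP [/andP [_ ->]].
pose f := fun i : 'I_k => nth c L i.
have finj : injective f.
  move=> i j; rewrite /f => /eqP; rewrite nth_uniq ?HL // => /eqP; exact: val_inj.
have Hk : 0 < k by [].
pose o := Ordinal Hk.
have fo : f o = c by [].
have Hf0 : forall i, p0 (f i) = 0 by move=> i; apply/eqP/L0; rewrite mem_nth // HL.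
have Hu := sg_reloc Sy o.
have H := embed_reach finj Hr0 Hf0 Hu.
apply: (reach_ext H) => d; case: (ext_cases f d) => [[i ->]|Hd].
  rewrite (ext_in finj) /single; case: (i =P o) => [->|/eqP Hio]; first by rewrite fo.
  have Hfc : f i != c by rewrite -fo (inj_eq finj).
  by rewrite -p0d // Hf0.
rewrite ext_out // p0d //; rewrite -fo eq_sym; exact: Hd.
Qed.


Definition Match (A : nat -> Prop) n (p : 'I_n -> nat) (s : 'I_n -> nat) :=
 (forall d, p d != 0 -> s d < n /\ single_val (s d).+1 A (p d)) /\
 (forall d d', p d != 0 -> p d' != 0 -> s d = s d' -> d = d').

Lemma match_good (A : nat -> Prop) n (p : 'I_n -> nat) s :
  (forall d, p d != 0 -> A (p d)) -> Match A p s -> Good A p.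
Proof.
move=> HA [M1 M2] d Hd; set v := p d; set l := #|[pred e | p e < v]|.
have v0 : 0 < v by rewrite lt0n.
case: (boolP [exists e, (v <= p e) && (s e <= l)]) => [/existsP [e /andP [He1 He2]]|].
  have pe0 : p e != 0 by rewrite -lt0n (leq_trans v0 He1).
  have [_ Se] := M1 e pe0.
  apply: sg_down (HA d Hd) v0 He1; apply: sg_mono Se _; by rewrite ltnS.
move/existsPn => H; exfalso.
pose S := enum [pred e | v <= p e].
have uS : uniq (map s S).
  rewrite map_inj_in_uniq ?enum_uniq // => x y; rewrite !mem_enum !inE => Hx Hy.
  apply: M2; by rewrite -lt0n (leq_trans v0).
have sub : {subset map s S <= iota l.+1 (n - l.+1)}.
  move=> z /mapP [e]; rewrite mem_enum inE => He ->; rewrite mem_iota.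
  have pe0 : p e != 0 by rewrite -lt0n (leq_trans v0).
  have := H e; rewrite He /= -ltnNge => Hl.
  have [Hn _] := M1 e pe0.
  apply/andP; split; lia.
have H1 := uniq_leq_size uS sub; rewrite size_map size_iota /S -cardE in H1.
have Hc := cardC [pred e | p e < v]; rewrite card_ord in Hc.
have H2 : #|[pred e | v <= p e]| = #|[predC [pred e | p e < v]]|.
  by apply: eq_card => e; rewrite !inE /= leqNgt.
have H3 : 0 < #|[pred e | v <= p e]|.
  apply/card_gt0P; exists d; by rewrite !inE /=.
rewrite H2 in H1 H3; rewrite -/l in Hc.
move: H1 H3 Hc; set X := #|_|; move=> H1 H3 Hc.

lia.
Qed.


Lemma fresh_index n (p : 'I_n -> nat) (s : 'I_n -> nat) c : p c = 0 ->
  (forall d d', p d != 0 -> p d' != 0 -> s d = s d' -> d = d') ->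
  exists k : 'I_n, forall d, p d != 0 -> s d != k.
Proof.
move=> Hc Hinj.
case: (boolP [exists k : 'I_n, [forall d, (p d != 0) ==> (s d != k)]]).
  move/existsP => [k /forallP Hk]; exists k => d Hd; by have := Hk d; rewrite Hd.
move/existsPn => H; exfalso.
have H' : forall k : 'I_n, exists d, (p d != 0) && (s d == k).
  move=> k; have := H k; move/forallPn => [d]; rewrite negb_imply negbK => Hd; by exists d.
pose h (k : 'I_n) := odflt c [pick d | (p d != 0) && (s d == k)].
have hP : forall k, (p (h k) != 0) && (s (h k) == k).
  move=> k; rewrite /h; case: pickP => [d //|H0].
  by have [d Hd] := H' k; rewrite H0 in Hd.
have hinj : injective h.
  move=> k1 k2 E; have := hP k1; have := hP k2; rewrite E.
  by move=> /andP [_ /eqP ->] /andP [_ /eqP /val_inj].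
have [hi _ hK] := injF_bij hinj.
by have := hP (hi c); rewrite hK Hc.
Qed.

Lemma reach_match (A : nat -> Prop) n (q0 : 'I_n -> nat) : A 1 -> reachable A q0 -> exists s, Match A q0 s.
Proof.
move=> h1 Hrq; elim: Hrq => [p0 H0|p q Hr [s [M1 M2]] Hst].
  by exists (fun _ => 0); split=> [d|d d']; rewrite H0.
have HAp := reach_A h1 Hr.
have Hrq : reachable A q by apply: (reach_step Hr).
have HAq := reach_A h1 Hrq.
move: Hst => [c [Hc [g [G1 [G2 [G3 [G4 G5]]]]]]].
pose pp := fun i => if i == c then 1 else p i.
have G5' : forall j, q j = if g j == j then \sum_(i | g i == j) pp i else 0 := G5.
have G2' : forall i, pp i = 0 -> g i = i := G2.
have [k0 Hk0] := fresh_index Hc M2.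
pose s1 := fun d => if d == c then val k0 else s d.
have ppA : forall d, pp d != 0 -> A (pp d).
  move=> d; rewrite /pp; case: (d =P c) => _ //; exact: HAp.
have N1 : forall d, pp d != 0 -> s1 d < n /\ single_val (s1 d).+1 A (pp d).
  move=> d; rewrite /pp /s1; case: (d =P c) => _ Hd; last by apply: M1.
  split; [exact: ltn_ord | exact: sg_one].
have I1 : forall d d', pp d != 0 -> pp d' != 0 -> s1 d = s1 d' -> d = d'.
  move=> d d'; rewrite /pp /s1.
  case: (d =P c) => [Edc|Hdc]; case: (d' =P c) => [Ed'c|Hd'c].
  - by rewrite Edc Ed'c.
  - move=> _ Hd' E; by have := Hk0 d' Hd'; rewrite -E eqxx.
  - move=> Hd _ E; by have := Hk0 d Hd; rewrite E eqxx.
  - exact: M2.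
pose F j := [pred i | (g i == j) && (pp i != 0)].
pose s' j := \max_(i in F j) s1 i.
have key : forall j, q j != 0 -> g j = j /\ exists2 i, i \in F j & s' j = s1 i.
  move=> j; rewrite G5'; case: (g j =P j) => // Hg Hq; split=> //.
  have Hcard : 0 < #|F j|.
    apply/card_gt0P.
    case: (boolP [exists i, (g i == j) && (pp i != 0)]) => [/existsP [i Hi]|/existsPn Hn].
      by exists i.
    exfalso; move: Hq; rewrite big1 // => i Hi; have := Hn i; rewrite Hi /=; by move/negPn/eqP.
  have [i0 Hi0 E] := @eq_bigmax_cond _ (F j) s1 Hcard; by exists i0.
exists s'; split; last first.
  move=> j j' Hj Hj' E; have [Hg [i Hi Ei]] := key j Hj; have [Hg' [i' Hi' Ei']] := key j' Hj'.
  move: Hi Hi'; rewrite !inE => /andP [/eqP gi ppi] /andP [/eqP gi' ppi'].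
  rewrite Ei Ei' in E; have := I1 i i' ppi ppi' E => Eii.
  by rewrite -gi -gi' Eii.
move=> j Hj; have [Hg [i Hi Ei]] := key j Hj.
have Hi' := Hi; move: Hi'; rewrite inE => /andP [/eqP gi ppi].
have [Hlt _] := N1 i ppi.
split; first by rewrite Ei.
set m := (s' j).+1.
pose u := fun k : 'I_m => \sum_(i0 | (g i0 == j) && (pp i0 != 0) && (s1 i0 == k)) pp i0.
have Hle : forall i0, i0 \in F j -> s1 i0 < m by move=> i0 Hi0; rewrite ltnS; apply: leq_bigmax_cond.
have sumu : \sum_k u k = q j.
  rewrite G5' Hg eqxx /u.
  rewrite [in RHS](bigID (fun i0 => pp i0 != 0)) /= [X in _ + X]big1; last by move=> i0 /andP [_ /negPn /eqP].
  rewrite addn0 (partition_big (fun i0 => inord (s1 i0) : 'I_m) predT) //=.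
  apply: eq_bigr => k _; apply: eq_bigl => i0.
  case: (boolP ((g i0 == j) && (pp i0 != 0))) => //= Hi0.
  have := Hle i0 Hi0; rewrite /m => Hl.
  apply/eqP/eqP => [E|E]; last by rewrite -E inordK.
  by apply: val_inj; rewrite /= inordK.
have uval : forall k, u k != 0 -> exists i0, [/\ g i0 == j, pp i0 != 0, s1 i0 = k & u k = pp i0].
  move=> k Hk.
  case: (boolP [exists i0, (g i0 == j) && (pp i0 != 0) && (s1 i0 == k)]) => [/existsP [i0 H0]|/existsPn Hn]; last first.
    exfalso; move: Hk; rewrite /u big1 // => i0 H0; by have := Hn i0; rewrite H0.
  move: (H0) => /andP [/andP [G0 P0] /eqP S0]; exists i0; split=> //.
  rewrite /u (bigD1 i0) //= big1 ?addn0 // => i1 /andP [/andP [/andP [_ P1] /eqP S1] N].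
  exfalso; have := I1 i1 i0 P1 P0; rewrite S1 S0 => E.
  by move: N; rewrite E // eqxx.
have Mu : Match A u (fun k => val k).
  split; last by move=> a b _ _; apply: val_inj.
  move=> k Hk; split; first exact: ltn_ord.
  have [i0 [_ P0 S0 ->]] := uval k Hk.
  have [_ H] := N1 i0 P0; by rewrite S0 in H.
have uA : forall k, u k != 0 -> A (u k).
  move=> k Hk; have [i0 [_ P0 _ ->]] := uval k Hk; exact: ppA.
have Ru := good_reach erefl (match_good uA Mu) uA.
have qj0 : 0 < q j by rewrite lt0n.
by apply: (core Ru (HAq j Hj) qj0); rewrite sumu.
Qed.



Lemma sv_size n (P : 'I_n -> nat) : size (sorted_values P) = n.
Proof. by rewrite /sorted_values size_sort size_map size_enum_ord. Qed.

Lemma sv_sorted n (P : 'I_n -> nat) : sorted leq (sorted_values P).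
Proof. rewrite /sorted_values; apply: sort_sorted; exact: leq_total. Qed.

Lemma sv_count n (P : 'I_n -> nat) v : count (fun x => x < v) (sorted_values P) = #|[pred e | P e < v]|.
Proof.
have Hp : perm_eq (sorted_values P) [seq P i | i <- enum 'I_n] by rewrite /sorted_values perm_sort.
by rewrite (permP Hp) count_map count_enum_card.
Qed.

Lemma sv_mem n (P : 'I_n -> nat) v : v \in sorted_values P -> exists d, P d = v.
Proof.
rewrite /sorted_values mem_sort => /mapP [d _ ->]; by exists d.
Qed.

Lemma sv_mono n (P : 'I_n -> nat) i j : i <= j -> j < n -> nth 0 (sorted_values P) i <= nth 0 (sorted_values P) j.
Proof.
move=> Hij Hj; apply: (sorted_leq_nth leq_trans leqnn 0 (sv_sorted P)) => //; rewrite inE sv_size //.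
exact: leq_ltn_trans Hij Hj.
Qed.

Lemma good_sorted (A : nat -> Prop) n (P : 'I_n -> nat) : Good A P ->
  forall i, i < n -> le_Single (nth 0 (sorted_values P) i) i.+1 A.
Proof.
move=> Hg i Hi; set v := nth 0 _ i.
case: (v =P 0) => [->|/eqP v0]; first exact: le_zero.
have : v \in sorted_values P by rewrite mem_nth // sv_size.
case/sv_mem => d Hd.
have Hd0 : P d != 0 by rewrite Hd.
have := Hg d Hd0; rewrite Hd => S.
apply: sg_le; apply: sg_mono S _; rewrite ltnS -(sv_count P v).
rewrite -(cat_take_drop i (sorted_values P)) count_cat.
have -> : count (fun x => x < v) (drop i (sorted_values P)) = 0.
  apply/eqP; rewrite -leqn0 leqNgt -has_count -all_predC; apply/(all_nthP 0) => j.
  rewrite size_drop sv_size => Hj; rewrite nth_drop /= -leqNgt /v; apply: sv_mono; lia.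
rewrite addn0; apply: leq_trans (count_size _ _) _; rewrite size_take; case: ifP => //.
by rewrite sv_size Hi.
Qed.

Lemma sorted_good (A : nat -> Prop) n (P : 'I_n -> nat) : (forall i, P i != 0 -> A (P i)) ->
  (forall i, i < n -> le_Single (nth 0 (sorted_values P) i) i.+1 A) -> Good A P.
Proof.
move=> hP H d Hd; set v := P d; set l := #|[pred e | P e < v]|.
have v0 : 0 < v by rewrite lt0n.
have Hl : l < n.
  have Hc := cardC [pred e | P e < v]; rewrite card_ord in Hc.
  have : 0 < #|[predC [pred e | P e < v]]| by apply/card_gt0P; exists d; rewrite !inE /= ltnn.
  rewrite -/l in Hc; move=> H0; move: H0 Hc; set X := #|_|; lia.
apply: le_sg (hP d Hd) v0; apply: le_down (H l Hl) _.
rewrite leqNgt; apply/negP => Hlt.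
have : l.+1 <= count (fun x => x < v) (sorted_values P).
  rewrite -(cat_take_drop l.+1 (sorted_values P)) count_cat.
  apply: leq_trans (leq_addr _ _); move: (all_count (fun x => x < v) (take l.+1 (sorted_values P))).
  have -> : all (fun x => x < v) (take l.+1 (sorted_values P)).
    apply/(all_nthP 0) => j; rewrite size_takel ?sv_size // => Hj.
    rewrite nth_take //; apply: leq_ltn_trans Hlt; apply: sv_mono => //; lia.
  by move/esym/eqP => ->; rewrite size_takel ?sv_size.
by rewrite sv_count -/l ltnn.
Qed.

Theorem mainTheorem6 (n : nat) (A : nat -> Prop)
  (hA : forall a, A a -> 0 < a) (h1 : A 1) (hn : 1 <= n)
  (P : 'I_n -> nat) (hP : forall i, P i != 0 -> A (P i)) :
  reachable A P <->
  (forall i, i < n -> le_Single (nth 0 (sorted_values P) i) i.+1 A).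
Proof.
split.
  move=> Hr; have [s Hs] := reach_match h1 Hr.
  exact: good_sorted (match_good hP Hs).
move=> H; exact: good_reach erefl (sorted_good hP H) hP.
Qed.
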